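(* Let $\beta=(\pi_\ell)_{\ell=1}^L$ be a chainable architecture, let $\mathbf{M}$ be a complex matrix of size $a_1b_1d_1\times a_Lc_Ld_L$, and let $s,q\in\{1,\dots,L-1\}$. If $\mathbf{N}$ is a projection of $\mathbf{M}$ onto $\mathcal{B}^{\beta_q}$, i.e. $\mathbf{N}\in\mathcal{B}^{\beta_q}$ and $\|\mathbf{M}-\mathbf{N}\|_F=\min_{\mathbf{B}\in\mathcal{B}^{\beta_q}}\|\mathbf{M}-\mathbf{B}\|_F$, then $$E^{\beta_s}(\mathbf{M})\ge E^{\beta_s}(\mathbf{N}).$$
   Context: A pattern is a tuple $\pi=(a,b,c,d)$ of positive integers; $\mathbf{S}_\pi:=\mathbf{I}_a\otimes\mathbf{1}_{b\times c}\otimes\mathbf{I}_d\in\{0,1\}^{abd\times acd}$. A $\pi$-factor is a complex $abd\times acd$ matrix with support in that of $\mathbf{S}_\pi$; $\Sigma^\pi$ is the set of $\pi$-factors. Patterns $\pi=(a,b,c,d),\pi'=(a',b',c',d')$ are chainable if $ac/a'=b'd'/d$ is an integer, $a\mid a'$, $d'\mid d$; then $\pi*\pi':=(a,bd/d',a'c'/a,d')$. An architecture $\beta=(\pi_\ell)_{\ell=1}^L$, $\pi_\ell=(a_\ell,b_\ell,c_\ell,d_\ell)$, is a sequence of patterns with $a_\ell c_\ell d_\ell=a_{\ell+1}b_{\ell+1}d_{\ell+1}$, chainable if every consecutive pair is chainable; $\pi_p*\cdots*\pi_q$ is the iterated product. For $s\in\{1,\dots,L-1\}$, $\beta_s:=(\pi_1*\cdots*\pi_s,\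 \pi_{s+1}*\cdots*\pi_L)$, $\mathcal{B}^{\beta_s}:=\{\mathbf{X}\mathbf{Y}:\mathbf{X}\in\Sigma^{\pi_1*\cdots*\pi_s},\mathbf{Y}\in\Sigma^{\pi_{s+1}*\cdots*\pi_L}\}$, and $E^{\beta_s}(\mathbf{A}):=\min_{\mathbf{B}\in\mathcal{B}^{\beta_s}}\|\mathbf{A}-\mathbf{B}\|_F$. *)

(* Defs.v *)
From HB Require Import structures.
From mathcomp Require Import all_boot all_order all_algebra.
From mathcomp Require Import all_classical all_reals.
From mathcomp Require Import complex.

Set Implicit Arguments.
Unset Strict Implicit.
Unset Printing Implicit Defensive.

Import Order.TTheory GRing.Theory Num.Theory.
Local Open Scope ring_scope.
Local Open Scope classical_set_scope.

Record pattern := Pattern { pa : nat; pb : nat; pc : nat; pd : nat }.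

Definition pattern_pos (p : pattern) : Prop :=
  (0 < pa p)%N /\ (0 < pb p)%N /\ (0 < pc p)%N /\ (0 < pd p)%N.

Definition prows (p : pattern) : nat := (pa p * pb p * pd p)%N.
Definition pcols (p : pattern) : nat := (pa p * pc p * pd p)%N.

(* Entry (i,j) of S_pi = I_a (x) 1_{b x c} (x) I_d (0-based, Kronecker order:
   i = i1*(b*d) + i2*d + i3, j = j1*(c*d) + j2*d + j3) is 1 iff i1 = j1 and
   i3 = j3. *)
Definition in_supp (p : pattern) (i j : nat) : bool :=
  (i %/ (pb p * pd p) == j %/ (pc p * pd p))%N && (i %% pd p == j %% pd p)%N.

Definition is_factor (R : realType) (p : pattern) (r k : nat)
  (X : 'M[R[i]]_(r, k)) : Prop :=
  r = prows p /\ k = pcols p /\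
  (forall (i : 'I_r) (j : 'I_k), ~~ in_supp p i j -> X i j = 0).

Definition chainable2 (p p' : pattern) : Prop :=
  [/\ (pa p' %| pa p * pc p)%N, (pd p %| pb p' * pd p')%N,
      (pa p * pc p %/ pa p' = pb p' * pd p' %/ pd p)%N,
      (pa p %| pa p')%N & (pd p' %| pd p)%N].

Definition pmul (p p' : pattern) : pattern :=
  Pattern (pa p) (pb p * pd p %/ pd p')%N (pa p' * pc p' %/ pa p)%N (pd p').

(* An architecture is a nonempty sequence of patterns (index l = 1..L is
   stored at position l-1). *)
Definition dummy_pattern := Pattern 1 1 1 1.
Definition pat (beta : seq pattern) (l : nat) : pattern :=
  nth dummy_pattern beta l.-1.

Definition is_architecture (beta : seq pattern) : Prop :=
  (0 < size beta)%N /\ (forall l, (1 <= l)%N -> (l <= size beta)%N -> pattern_pos (pat beta l)) /\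
  (forall l, (1 <= l)%N -> (l < size beta)%N ->
     pcols (pat beta l) = prows (pat beta l.+1)).

Definition chainable_arch (beta : seq pattern) : Prop :=
  is_architecture beta /\
  (forall l, (1 <= l)%N -> (l < size beta)%N ->
     chainable2 (pat beta l) (pat beta l.+1)).

Definition pprod (beta : seq pattern) (p q : nat) : pattern :=
  foldl (fun acc l => pmul acc (pat beta l)) (pat beta p) (iota p.+1 (q - p)).

Definition Bset (R : realType) (beta : seq pattern) (s m n : nat)
  : set 'M[R[i]]_(m, n) :=
  [set B | exists k (X : 'M[R[i]]_(m, k)) (Y : 'M[R[i]]_(k, n)),
      is_factor (pprod beta 1 s) X /\
      is_factor (pprod beta s.+1 (size beta)) Y /\ B = X *m Y].

Definition frob (R : realType) (m n : nat) (A : 'M[R[i]]_(m, n)) : R :=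
  Num.sqrt (\sum_(i < m) \sum_(j < n) ((@complex.Re R (A i j)) ^+ 2 + (@complex.Im R (A i j)) ^+ 2)).

Definition Ebeta (R : realType) (beta : seq pattern) (s m n : nat)
  (A : 'M[R[i]]_(m, n)) : R :=
  inf [set frob (A - B) | B in @Bset R beta s m n].

(* Main.v *)
Require Import Defs.
Set Warnings "-all".
From HB Require Import structures.
From mathcomp Require Import all_boot all_order all_algebra.
From mathcomp Require Import all_classical all_reals.
From mathcomp Require Import complex.
Import Order.TTheory GRing.Theory Num.Theory.
Local Open Scope ring_scope.
Local Open Scope complex_scope.
Lemma mulJ (R : rcfType) (z : R[i]) : z * z^* = ((complex.Re z)^+2 + (complex.Im z)^+2)%:C.
Proof. by case: z => a b /=; simpc; rewrite !expr2 (mulrC b a) addNr. Qed.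

Definition ct {R : rcfType} {m n} (A : 'M[R[i]]_(m, n)) : 'M[R[i]]_(n, m) :=
  (map_mx conjc A)^T.

Lemma ctM {R : rcfType} {m n p} (A : 'M[R[i]]_(m, n)) (B : 'M[R[i]]_(n, p)) :
  ct (A *m B) = ct B *m ct A.
Proof. by rewrite /ct map_mxM trmx_mul. Qed.

Lemma ctK {R : rcfType} {m n} (A : 'M[R[i]]_(m, n)) : ct (ct A) = A.
Proof. by apply/matrixP=> i j; rewrite /ct !mxE conjcK. Qed.

Lemma ctD {R : rcfType} {m n} (A B : 'M[R[i]]_(m, n)) : ct (A + B) = ct A + ct B.
Proof. by apply/matrixP=> i j; rewrite /ct !mxE rmorphD. Qed.

Lemma ctN {R : rcfType} {m n} (A : 'M[R[i]]_(m, n)) : ct (- A) = - ct A.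
Proof. by apply/matrixP=> i j; rewrite /ct !mxE rmorphN. Qed.

Lemma ct0 {R : rcfType} {m n} : ct (0 : 'M[R[i]]_(m, n)) = 0.
Proof. by apply/matrixP=> i j; rewrite /ct !mxE rmorph0. Qed.

Definition sqv {R : rcfType} {n} (v : 'rV[R[i]]_n) : R[i] := (v *m ct v) 0 0.

Lemma sqvE {R : rcfType} {n} (v : 'rV[R[i]]_n) :
  sqv v = (\sum_j ((complex.Re (v 0 j))^+2 + (complex.Im (v 0 j))^+2))%:C.
Proof.
rewrite /sqv mxE rmorph_sum; apply: eq_bigr => j _.
by rewrite /ct !mxE mulJ.
Qed.

Lemma sqv_ge0 {R : rcfType} {n} (v : 'rV[R[i]]_n) : 0 <= sqv v.
Proof.
rewrite sqvE ler0c; apply: sumr_ge0 => j _; apply: addr_ge0; exact: sqr_ge0.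
Qed.

Lemma sqv_eq0 {R : rcfType} {n} (v : 'rV[R[i]]_n) : sqv v = 0 -> v = 0.
Proof.
rewrite sqvE => /complexI /eqP; rewrite psumr_eq0; last first.
  by move=> j _; apply: addr_ge0; exact: sqr_ge0.
move=> /allP H; apply/matrixP => i j; rewrite (ord1 i) mxE.
have /H : j \in index_enum 'I_n by rewrite mem_index_enum.
rewrite /= paddr_eq0 ?sqr_ge0 // !sqrf_eq0 => /andP[/eqP h1 /eqP h2].
by move: (v 0 j) h1 h2 => [a b] /= -> ->.
Qed.

Lemma pyth {R : rcfType} {n} (a b : 'rV[R[i]]_n) :
  a *m ct b = 0 -> sqv (a + b) = sqv a + sqv b.
Proof.
move=> H.
have H2 : b *m ct a = 0 by have := congr1 ct H; rewrite ctM ctK ct0.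
by rewrite /sqv ctD mulmxDr !mulmxDl H H2 add0r addr0 mxE.
Qed.

Lemma pyth' {R : rcfType} {n} (a b : 'rV[R[i]]_n) :
  b *m ct a = 0 -> sqv (a + b) = sqv a + sqv b.
Proof.
move=> H; apply: pyth.
by have := congr1 ct H; rewrite ctM ctK ct0.
Qed.

Definition projm {R : rcfType} {k n} (Z : 'M[R[i]]_(k, n)) : 'M[R[i]]_n :=
  ct (row_base Z) *m invmx (row_base Z *m ct (row_base Z)) *m row_base Z.

Lemma gram_unit {R : rcfType} {k n} (Z : 'M[R[i]]_(k, n)) :
  row_base Z *m ct (row_base Z) \in unitmx.
Proof.
rewrite -row_free_unit; apply: inj_row_free => v Hv.
have H0 : sqv (v *m row_base Z) = 0.
  by rewrite /sqv ctM mulmxA -(mulmxA v) Hv mul0mx mxE.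
have := sqv_eq0 _ H0 => /eqP; rewrite -(mul0mx _ (row_base Z)).
by move/eqP/(row_free_inj (row_base_free Z)).
Qed.

Lemma proj_sub {R : rcfType} {k n} (Z : 'M[R[i]]_(k, n)) (v : 'rV[R[i]]_n) :
  (v *m projm Z <= Z)%MS.
Proof.
have hb : (row_base Z <= Z)%MS by rewrite eq_row_base.
rewrite /projm mulmxA; apply: submx_trans hb; exact: submxMl.
Qed.

Lemma proj_orth {R : rcfType} {k n} (Z : 'M[R[i]]_(k, n)) (v : 'rV[R[i]]_n) :
  (v - v *m projm Z) *m ct Z = 0.
Proof.
have [D HZ] : exists D, Z = D *m row_base Z.
  by apply/submxP; rewrite eq_row_base.
have GU := gram_unit Z.
rewrite /projm in GU *.
move: HZ GU; set W := row_base Z => HZ GU.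
have E := congr1 ct HZ; rewrite ctM in E; rewrite E mulmxA.
suff -> : (v - v *m (ct W *m invmx (W *m ct W) *m W)) *m ct W = 0 by rewrite mul0mx.
clearbody W.
by rewrite mulmxBl -!mulmxA mulVmx // mulmx1 subrr.
Qed.

Lemma orth_sub {R : rcfType} {k n} {Z : 'M[R[i]]_(k, n)} {a u : 'rV[R[i]]_n} :
  a *m ct Z = 0 -> (u <= Z)%MS -> a *m ct u = 0.
Proof. by move=> H /submxP[D ->]; rewrite ctM mulmxA H mul0mx. Qed.

Lemma proj_uniq {R : rcfType} {k n} (Z : 'M[R[i]]_(k, n)) (v u1 u2 : 'rV[R[i]]_n) :
  (u1 <= Z)%MS -> (u2 <= Z)%MS ->
  (v - u1) *m ct Z = 0 -> (v - u2) *m ct Z = 0 -> u1 = u2.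
Proof.
move=> h1 h2 o1 o2.
have hd : (u1 - u2 <= Z)%MS by rewrite addmx_sub ?eqmx_opp.
have od : (u1 - u2) *m ct Z = 0.
  have -> : u1 - u2 = (v - u2) - (v - u1).
    by rewrite opprB [RHS]addrC addrA subrK.
  by rewrite mulmxBl o1 o2 subrr.
have := orth_sub od hd => H.
have : sqv (u1 - u2) = 0 by rewrite /sqv H mxE.
by move/sqv_eq0/eqP; rewrite subr_eq0 => /eqP.
Qed.

Lemma proj_contr {R : rcfType} {k n} (Z : 'M[R[i]]_(k, n)) (v : 'rV[R[i]]_n) :
  sqv (v *m projm Z) <= sqv v.
Proof.
have o := orth_sub (proj_orth Z v) (proj_sub Z v).
have -> : sqv v = sqv (v *m projm Z + (v - v *m projm Z)) by rewrite addrC subrK.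
by rewrite pyth' // lerDl sqv_ge0.
Qed.

Lemma proj_best {R : rcfType} {k n} (Z : 'M[R[i]]_(k, n)) (v u : 'rV[R[i]]_n) :
  (u <= Z)%MS -> sqv (v - u) = sqv (v - v *m projm Z) + sqv (v *m projm Z - u).
Proof.
move=> hu.
have hd : (v *m projm Z - u <= Z)%MS by rewrite addmx_sub ?eqmx_opp ?proj_sub.
have o := orth_sub (proj_orth Z v) hd.
by rewrite -pyth // addrA subrK.
Qed.

Definition FR {R : rcfType} {m n} (A : 'M[R[i]]_(m, n)) : R :=
  \sum_(i < m) \sum_(j < n) ((complex.Re (A i j)) ^+ 2 + (complex.Im (A i j)) ^+ 2).

Lemma FR_C {R : rcfType} {m n} (A : 'M[R[i]]_(m, n)) :
  (FR A)%:C = \sum_i sqv (row i A).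
Proof.
rewrite /FR rmorph_sum; apply: eq_bigr => i _; rewrite sqvE.
by congr (_ %:C); apply: eq_bigr => j _; rewrite !mxE.
Qed.

Lemma FR_le {R : rcfType} {m n} (A B : 'M[R[i]]_(m, n)) :
  (FR A <= FR B) = (\sum_i sqv (row i A) <= \sum_i sqv (row i B)).
Proof. by rewrite -!FR_C lecR. Qed.

Lemma FR_ge0 {R : rcfType} {m n} (A : 'M[R[i]]_(m, n)) : 0 <= FR A.
Proof.
by apply: sumr_ge0 => i _; apply: sumr_ge0 => j _; apply: addr_ge0; apply: sqr_ge0.
Qed.

Definition dg {R : rcfType} {k} (P : 'I_k -> bool) : 'M[R[i]]_k :=
  diag_mx (\row_r (P r)%:R).

Lemma ct_dg {R : rcfType} {k} (P : 'I_k -> bool) : ct (@dg R k P) = dg P.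
Proof.
apply/matrixP => a b; rewrite /ct /dg !mxE.
by case: (eqVneq a b) => [->|ne]; rewrite ?eqxx ?conjc_nat // !mulr0n conjc0.
Qed.

Lemma mul_dg {R : rcfType} {m k} (A : 'M[R[i]]_(m, k)) (P : 'I_k -> bool) :
  (A *m dg P) = \matrix_(i, j) (if P j then A i j else 0).
Proof.
apply/matrixP => a b; rewrite /dg mul_mx_diag !mxE.
by case: (P b); rewrite ?mulr1 ?mulr0.
Qed.

Lemma dg_mul {R : rcfType} {m k} (A : 'M[R[i]]_(k, m)) (P : 'I_k -> bool) :
  (dg P *m A) = \matrix_(i, j) (if P i then A i j else 0).
Proof.
apply/matrixP => a b; rewrite /dg mul_diag_mx !mxE.
by case: (P a); rewrite ?mul1r ?mul0r.
Qed.

Lemma sum_row_le {R : rcfType} {m n} (A B : 'M[R[i]]_(m, n)) (i0 : 'I_m) :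
  (forall i, i != i0 -> row i A = row i B) ->
  (\sum_i sqv (row i A) <= \sum_i sqv (row i B)) = (sqv (row i0 A) <= sqv (row i0 B)).
Proof.
move=> H; rewrite (bigD1 i0) // [X in _ <= X](bigD1 i0) //=.
rewrite (eq_bigr (fun i => sqv (row i B))) ?lerD2r // => i /H ->.
by [].
Qed.

Lemma stepA {R : rcfType} {m n k} (SXq : 'I_m -> 'I_k -> bool)
  (M N : 'M[R[i]]_(m, n)) (X : 'M_(m, k)) (Y : 'M_(k, n)) :
  (forall i r, ~~ SXq i r -> X i r = 0) -> N = X *m Y ->
  (forall X2 : 'M_(m, k), (forall i r, ~~ SXq i r -> X2 i r = 0) ->
      FR (M - N) <= FR (M - X2 *m Y)) ->
  forall i, row i N = row i M *m projm (dg (SXq i) *m Y).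
Proof.
move=> hX hN hopt i.
set Z := dg (SXq i) *m Y.
have hNZ : (row i N <= Z)%MS.
  have -> : row i N = row i X *m Z.
    rewrite hN row_mul /Z mulmxA mul_dg; congr (_ *m _).
    apply/matrixP => a b; rewrite !mxE.
    by case h: (SXq i b) => //; rewrite hX ?h.
  exact: submxMl.
have [D hD] : exists D, row i M *m projm Z = D *m Z by apply/submxP; exact: proj_sub.
set X2 := \matrix_(i', r) (if i' == i then (D *m dg (SXq i)) 0 r else X i' r).
have hX2 : forall i' r, ~~ SXq i' r -> X2 i' r = 0.
  move=> i' r hr; rewrite /X2 mxE; case: ifP => [/eqP e|_]; last exact: hX.
  by rewrite mul_dg mxE -e (negPf hr).
have := hopt X2 hX2; rewrite FR_le (sum_row_le _ _ i); last first.
  move=> i' ne; rewrite !rowE !mulmxBr -!rowE; congr (_ - _).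
  rewrite hN !row_mul; congr (_ *m _).
  by apply/matrixP => a b; rewrite !mxE (negPf ne).
have -> : row i (M - X2 *m Y) = row i M - row i M *m projm Z.
  rewrite !rowE mulmxBr -!rowE; congr (_ - _).
  rewrite hD row_mul /Z mulmxA; congr (_ *m _).
  by apply/matrixP => a b; rewrite !mxE eqxx (ord1 a).
have -> : row i (M - N) = row i M - row i N by rewrite !rowE mulmxBr.
rewrite (proj_best _ (row i M) _ hNZ) -lerBrDl subrr => hle.
have h0 : sqv (row i M *m projm Z - row i N) = 0.
  by apply/eqP; rewrite eq_le hle sqv_ge0.
by move/sqv_eq0/eqP: h0; rewrite subr_eq0 => /eqP.
Qed.

Lemma proj_supp {R : rcfType} {k n} (Z : 'M[R[i]]_(k, n)) (S : 'I_n -> bool)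
  (v : 'rV[R[i]]_n) :
  (forall r j j', Z r j != 0 -> Z r j' != 0 -> S j -> S j') ->
  (forall j, ~~ S j -> v 0 j = 0) ->
  forall j, ~~ S j -> (v *m projm Z) 0 j = 0.
Proof.
move=> hZ hv.
set u := v *m projm Z.
set E := dg (fun r => [exists j, (Z r j != 0) && S j]) : 'M[R[i]]_k.
have hZE : Z *m dg S = E *m Z.
  rewrite mul_dg dg_mul; apply/matrixP => r j; rewrite !mxE.
  have [z0|nz] := eqVneq (Z r j) 0; first by rewrite z0; do 2 case: ifP => _ //.
  case hS: (S j).
    by case: ifP => // /negbT /existsPn /(_ j); rewrite nz hS.
  case: ifP => // /existsP [j0 /andP [nz0 hS0]].
  by have := hZ r j0 j nz0 nz hS0; rewrite hS.
have hvS : v *m dg S = v.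
  rewrite mul_dg; apply/matrixP => a j; rewrite !mxE (ord1 a).
  by case hS: (S j) => //; rewrite hv ?hS.
have hu1 : (u *m dg S <= Z)%MS.
  have [D ->] : exists D, u = D *m Z by apply/submxP; exact: proj_sub.
  by rewrite -mulmxA hZE mulmxA; exact: submxMl.
have ho : (v - u) *m ct Z = 0 by exact: proj_orth.
have ho1 : (v - u *m dg S) *m ct Z = 0.
  rewrite -{1}hvS -mulmxBl -mulmxA.
  have -> : dg S *m ct Z = ct Z *m ct E by rewrite -ct_dg -!ctM hZE.
  by rewrite mulmxA ho mul0mx.
have := proj_uniq _ _ _ _ hu1 (proj_sub Z v) ho1 ho => e j hj.
by rewrite /u -e mul_dg mxE (negPf hj).
Qed.

Lemma core {R : rcfType} {m n k k'} (SXq : 'I_m -> 'I_k -> bool)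
  (SXs : 'I_m -> 'I_k' -> bool) (SYs : 'I_k' -> 'I_n -> bool)
  (M N : 'M[R[i]]_(m, n)) (X : 'M_(m, k)) (Y : 'M_(k, n)) :
  (forall i r, ~~ SXq i r -> X i r = 0) -> N = X *m Y ->
  (forall X2 : 'M_(m, k), (forall i r, ~~ SXq i r -> X2 i r = 0) ->
      FR (M - N) <= FR (M - X2 *m Y)) ->
  (forall i i' t, SXs i t -> SXs i' t -> forall r, SXq i r = SXq i' r) ->
  (forall r t j j', Y r j != 0 -> Y r j' != 0 -> SYs t j -> SYs t j') ->
  forall (X' : 'M_(m, k')) (Y' : 'M_(k', n)),
  (forall i t, ~~ SXs i t -> X' i t = 0) -> (forall t j, ~~ SYs t j -> Y' t j = 0) ->
  exists Y'' : 'M_(k', n), (forall t j, ~~ SYs t j -> Y'' t j = 0) /\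
     FR (N - X' *m Y'') <= FR (M - X' *m Y').
Proof.
move=> hX hN hopt H1 H2 X' Y' hX' hY'.
have hA := stepA _ _ _ _ _ hX hN hopt.
pose P i := projm (dg (SXq i) *m Y).
have hP : forall i i' t, SXs i t -> SXs i' t -> P i = P i'.
  move=> i i' t h h'; rewrite /P; congr (projm (_ *m Y)); rewrite /dg.
  by congr diag_mx; apply/matrixP => a r; rewrite !mxE (H1 i i' t h h').
pose Y'' := \matrix_(t, j) (match [pick i | SXs i t] with
                            | Some i => (row t Y' *m P i) 0 j | None => 0 end).
exists Y''; split.
  move=> t j hj; rewrite /Y'' mxE; case: pickP => [i hi|//].
  apply: proj_supp hj => [r j1 j2|j1 hj1].
    rewrite /dg dg_mul !mxE; case: (SXq i r); last by rewrite eqxx.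
    exact: H2.
  by rewrite mxE hY'.
have hrow : forall i, row i (X' *m Y'') = row i (X' *m Y') *m P i.
  move=> i; rewrite !row_mul (mulmx_sum_row (row i X') Y'') (mulmx_sum_row (row i X') Y') mulmx_suml.
  apply: eq_bigr => t _.
  rewrite -scalemxAl; case h: (SXs i t); last by rewrite mxE hX' ?h // !scale0r.
  congr (_ *: _); apply/matrixP => a j; rewrite !mxE (ord1 a).
  case: pickP => [i0 hi0|/(_ i)]; last by rewrite h.
  by rewrite (hP i0 i t) // !mxE.
rewrite FR_le; apply: ler_sum => i _.
have -> : row i (N - X' *m Y'') = (row i (M - X' *m Y')) *m P i.
  by rewrite !rowE !mulmxBr -!rowE hA hrow mulmxBl.
exact: proj_contr.
Qed.

Lemma FR_tr {R : rcfType} {m n} (A : 'M[R[i]]_(m, n)) : FR A^T = FR A.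
Proof. by rewrite /FR exchange_big; apply: eq_bigr => j _; apply: eq_bigr => i _; rewrite mxE. Qed.

Lemma core_t {R : rcfType} {m n k k'} (SYq : 'I_k -> 'I_n -> bool)
  (SXs : 'I_m -> 'I_k' -> bool) (SYs : 'I_k' -> 'I_n -> bool)
  (M N : 'M[R[i]]_(m, n)) (X : 'M_(m, k)) (Y : 'M_(k, n)) :
  (forall r j, ~~ SYq r j -> Y r j = 0) -> N = X *m Y ->
  (forall Y2 : 'M_(k, n), (forall r j, ~~ SYq r j -> Y2 r j = 0) ->
      FR (M - N) <= FR (M - X *m Y2)) ->
  (forall j j' t, SYs t j -> SYs t j' -> forall r, SYq r j = SYq r j') ->
  (forall r t i i', X i r != 0 -> X i' r != 0 -> SXs i t -> SXs i' t) ->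
  forall (X' : 'M_(m, k')) (Y' : 'M_(k', n)),
  (forall i t, ~~ SXs i t -> X' i t = 0) -> (forall t j, ~~ SYs t j -> Y' t j = 0) ->
  exists X'' : 'M_(m, k'), (forall i t, ~~ SXs i t -> X'' i t = 0) /\
     FR (N - X'' *m Y') <= FR (M - X' *m Y').
Proof.
move=> hY hN hopt H1 H2 X' Y' hX' hY'.
have := @core R n m k k' (fun j r => SYq r j) (fun j t => SYs t j) (fun t i => SXs i t)
  M^T N^T Y^T X^T _ _ _ _ _ Y'^T X'^T _ _.
case.
- by move=> j r h; rewrite mxE hY.
- by rewrite hN trmx_mul.
- move=> X2 hX2; have := hopt X2^T.
  rewrite -FR_tr -(FR_tr (M - X *m X2^T)) !linearB /= trmx_mul !trmxK; apply.
  by move=> r j h; rewrite mxE hX2.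
- by move=> j j' t h h' r; exact: (H1 j j' t h h' r).
- by move=> r t i i' h h'; rewrite !mxE in h h'; exact: (H2 r t i i' h h').
- by move=> j t h; rewrite mxE hY'.
- by move=> t i h; rewrite mxE hX'.
move=> Y'' [hY'' hle]; exists Y''^T; split.
  by move=> i t h; rewrite mxE hY''.
rewrite -FR_tr -(FR_tr (M - X' *m Y')) !linearB /= !trmx_mul !trmxK; exact: hle.
Qed.
From mathcomp Require Import zify.

Definition fstep (beta : seq pattern) (acc : pattern) (l : nat) := pmul acc (pat beta l).

Lemma pprodE beta p q : pprod beta p q = foldl (fstep beta) (pat beta p) (iota p.+1 (q - p)).
Proof. by []. Qed.

Lemma pa_fold beta s acc : pa (foldl (fstep beta) acc s) = pa acc.
Proof. by elim: s acc => //= l s IH acc; rewrite IH. Qed.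

Lemma pprod_last beta p q : (p < q)%N ->
  pprod beta p q = pmul (foldl (fstep beta) (pat beta p) (iota p.+1 (q - p.+1))) (pat beta q).
Proof.
move=> lt; rewrite pprodE.
have -> : (q - p = (q - p.+1) + 1)%N by lia.
rewrite iotaD foldl_cat /=; congr (pmul _ (pat _ _)); lia.
Qed.

Lemma pprod_pa beta p q : pa (pprod beta p q) = pa (pat beta p).
Proof. by rewrite pprodE pa_fold. Qed.

Lemma pprod_pd beta p q : (p <= q)%N -> pd (pprod beta p q) = pd (pat beta q).
Proof.
rewrite leq_eqVlt => /orP[/eqP <-|lt]; first by rewrite pprodE subnn.
by rewrite pprod_last.
Qed.

Lemma pprod_pc beta p q : (p <= q)%N -> (0 < pa (pat beta q))%N ->
  pc (pprod beta p q) = (pa (pat beta q) * pc (pat beta q) %/ pa (pat beta p))%N.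
Proof.
rewrite leq_eqVlt => /orP[/eqP <-|lt] pos.
  by rewrite pprodE subnn /= mulKn.
by rewrite pprod_last //= pa_fold.
Qed.

Lemma pbd_fold beta s acc :
  path (fun x y => (y %| x)%N) (pd acc) (map (fun l => pd (pat beta l)) s) ->
  (pb (foldl (fstep beta) acc s) * pd (foldl (fstep beta) acc s) = pb acc * pd acc)%N.
Proof.
elim: s acc => //= l s IH acc /andP[h hp]; rewrite IH //=.
by rewrite divnK // dvdn_mull.
Qed.

Lemma path_iota (g : nat -> nat) (rel : nat -> nat -> bool) x n :
  (forall l, (x <= l < x + n)%N -> rel (g l.-1) (g l)) ->
  path rel (g x.-1) (map g (iota x n)).
Proof.
elim: n x => //= n IH x H; apply/andP; split.
  by apply: H; lia.
have -> : x = (x.+1).-1 by [].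
apply: IH => l hl; apply: H; lia.
Qed.

Lemma rowclass_eq (p p' : pattern) i i' t r :
  (pb p * pd p = pb p' * pd p')%N -> (pd p' %| pd p)%N ->
  in_supp p i t -> in_supp p i' t -> in_supp p' i r = in_supp p' i' r.
Proof.
rewrite /in_supp => hW hd /andP[/eqP h1 /eqP h2] /andP[/eqP h1' /eqP h2'].
have e1 : (i %/ (pb p' * pd p') = i' %/ (pb p' * pd p'))%N by rewrite -hW h1 h1'.
have e2 : (i %% pd p' = i' %% pd p')%N.
  by rewrite -(modn_dvdm i hd) -(modn_dvdm i' hd) h2 h2'.
by rewrite e1 e2.
Qed.

Lemma rowclass_imp (p p' : pattern) i i' t r :
  (pb p * pd p = pb p' * pd p')%N -> (pd p %| pd p')%N ->
  in_supp p' i r -> in_supp p' i' r -> in_supp p i t -> in_supp p i' t.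
Proof.
rewrite /in_supp => hW hd /andP[/eqP h1 /eqP h2] /andP[/eqP h1' /eqP h2'].
have e1 : (i %/ (pb p * pd p) = i' %/ (pb p * pd p))%N by rewrite hW h1 h1'.
have e2 : (i %% pd p = i' %% pd p)%N.
  by rewrite -(modn_dvdm i hd) -(modn_dvdm i' hd) h2 h2'.
by rewrite e1 e2.
Qed.

Lemma colclass_imp (Q Q' : pattern) r t j j' :
  pd Q = pd Q' -> (pc Q' %| pc Q)%N ->
  in_supp Q' r j -> in_supp Q' r j' -> in_supp Q t j -> in_supp Q t j'.
Proof.
rewrite /in_supp => hD /dvdnP[w hw] /andP[/eqP h1 /eqP h2] /andP[/eqP h1' /eqP h2'].
have e1 : (j %/ (pc Q * pd Q) = j' %/ (pc Q * pd Q))%N.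
  by rewrite hw hD -mulnA [(w * _)%N]mulnC !(divnMA _ (pc Q' * pd Q')) -h1 -h1'.
have e2 : (j %% pd Q = j' %% pd Q)%N by rewrite hD -h2 -h2'.
by rewrite e1 e2.
Qed.

Lemma colclass_eq (Q Q' : pattern) r t j j' :
  pd Q = pd Q' -> (pc Q %| pc Q')%N ->
  in_supp Q t j -> in_supp Q t j' -> in_supp Q' r j = in_supp Q' r j'.
Proof.
rewrite /in_supp => hD /dvdnP[w hw] /andP[/eqP h1 /eqP h2] /andP[/eqP h1' /eqP h2'].
have e1 : (j %/ (pc Q' * pd Q') = j' %/ (pc Q' * pd Q'))%N.
  by rewrite hw -hD -mulnA [(w * _)%N]mulnC !(divnMA _ (pc Q * pd Q)) -h1 -h1'.
have e2 : (j %% pd Q' = j' %% pd Q')%N by rewrite -hD -h2 -h2'.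
by rewrite e1 e2.
Qed.

Lemma div_chain (a b T : nat) : (0 < a)%N -> (a %| b)%N -> (b %| T)%N ->
  (T %/ a = T %/ b * (b %/ a))%N.
Proof.
move=> a0 /dvdnP[w ->] /dvdnP[u ->].
have b0 : (0 < w * a)%N \/ w = 0%N by case: w => [|w]; [right|left; rewrite muln_gt0 a0].
case: b0 => [b0|->]; last by rewrite !mul0n muln0 div0n.
by rewrite (mulnK u b0) (mulnK w a0) mulnA (mulnK _ a0).
Qed.

Lemma arch_d_step {beta l} : chainable_arch beta -> (1 <= l)%N -> (l < size beta)%N ->
  (pd (pat beta l.+1) %| pd (pat beta l))%N.
Proof. by move=> [_ hc] h1 h2; case: (hc l h1 h2). Qed.

Lemma arch_a_step {beta l} : chainable_arch beta -> (1 <= l)%N -> (l < size beta)%N ->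
  (pa (pat beta l) %| pa (pat beta l.+1))%N.
Proof. by move=> [_ hc] h1 h2; case: (hc l h1 h2). Qed.

Lemma arch_pos {beta l} : chainable_arch beta -> (1 <= l)%N -> (l <= size beta)%N ->
  pattern_pos (pat beta l).
Proof. by move=> [[_ [hp _]] _] h1 h2; apply: hp. Qed.

Lemma d_chain beta p q : chainable_arch beta -> (1 <= p)%N -> (p <= q)%N ->
  (q <= size beta)%N -> (pd (pat beta q) %| pd (pat beta p))%N.
Proof.
move=> hb hp; elim: q => [|q IH] hq hqL; first by lia.
move: hq; rewrite leq_eqVlt => /orP[/eqP <-|hq]; first exact: dvdnn.
apply: dvdn_trans (arch_d_step hb _ _) (IH _ _); lia.
Qed.

Lemma a_chain beta p q : chainable_arch beta -> (1 <= p)%N -> (p <= q)%N ->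
  (q <= size beta)%N -> (pa (pat beta p) %| pa (pat beta q))%N.
Proof.
move=> hb hp; elim: q => [|q IH] hq hqL; first by lia.
move: hq; rewrite leq_eqVlt => /orP[/eqP <-|hq]; first exact: dvdnn.
apply: dvdn_trans (IH _ _) (arch_a_step hb _ _); lia.
Qed.

Lemma P_pd beta s : (1 <= s)%N -> pd (pprod beta 1 s) = pd (pat beta s).
Proof. by move=> h; rewrite pprod_pd. Qed.

Lemma P_pbd beta s : chainable_arch beta -> (1 <= s)%N -> (s <= size beta)%N ->
  (pb (pprod beta 1 s) * pd (pprod beta 1 s) = pb (pat beta 1) * pd (pat beta 1))%N.
Proof.
move=> hb h1 h2; rewrite pprodE pbd_fold //.
have -> : pd (pat beta 1) = (fun l => pd (pat beta l)) (2.-1) by [].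
apply: path_iota => l hl; apply: arch_d_step hb _ _ => //; lia.
Qed.

Lemma Q_pd beta s : (s < size beta)%N -> pd (pprod beta s.+1 (size beta)) = pd (pat beta (size beta)).
Proof. by move=> h; rewrite pprod_pd. Qed.

Lemma Q_pc beta s : chainable_arch beta -> (s < size beta)%N ->
  pc (pprod beta s.+1 (size beta)) =
  (pa (pat beta (size beta)) * pc (pat beta (size beta)) %/ pa (pat beta s.+1))%N.
Proof.
move=> hb h; rewrite pprod_pc //.
by case: (arch_pos hb (l := size beta) _ _) => //; lia.
Qed.

Lemma Q_pc_dvd beta s q : chainable_arch beta -> (s <= q)%N -> (q < size beta)%N ->
  (pc (pprod beta q.+1 (size beta)) %| pc (pprod beta s.+1 (size beta)))%N.
Proof.
move=> hb hsq hq; rewrite !Q_pc //; last by lia.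
set T := (pa _ * pc _)%N.
have ha0 : (0 < pa (pat beta s.+1))%N by case: (arch_pos hb (l := s.+1) _ _) => //; lia.
have h1 : (pa (pat beta s.+1) %| pa (pat beta q.+1))%N by apply: a_chain => //; lia.
have h2 : (pa (pat beta q.+1) %| T)%N by rewrite /T dvdn_mulr // a_chain //; lia.
rewrite (div_chain _ _ _ ha0 h1 h2); exact: dvdn_mulr.
Qed.

Local Close Scope complex_scope.
Local Open Scope classical_set_scope.

Lemma frobE (R : realType) m n (A : 'M[R[i]]_(m, n)) : frob A = Num.sqrt (FR A).
Proof. by []. Qed.

Lemma frob_le (R : realType) m n (A B : 'M[R[i]]_(m, n)) :
  (frob A <= frob B) = (FR A <= FR B).
Proof. by rewrite !frobE ler_sqrt // FR_ge0. Qed.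

Lemma hlb {R : realType} beta s0 {m n} (A : 'M[R[i]]_(m, n)) :
  has_lbound [set frob (A - B) | B in @Bset R beta s0 m n].
Proof. by exists 0 => y [B _ <-]; rewrite frobE sqrtr_ge0. Qed.

Theorem lemma7p11 (R : realType) (beta : seq pattern) (m n : nat)
  (M : 'M[R[i]]_(m, n)) (s q : nat) :
  chainable_arch beta ->
  m = prows (pat beta 1) -> n = pcols (pat beta (size beta)) ->
  (1 <= s)%N -> (s < size beta)%N -> (1 <= q)%N -> (q < size beta)%N ->
  forall N : 'M[R[i]]_(m, n),
    @Bset R beta q m n N ->
    frob (M - N) = Ebeta beta q M ->
    Ebeta beta s N <= Ebeta beta s M.
Proof.
move=> hb hm hn hs1 hsL hq1 hqL N [kq [X [Y [[hXr [hXk hXs]] [[hYr [hYk hYs]] hN]]]]] hE.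
have hopt : forall B, @Bset R beta q m n B -> FR (M - N) <= FR (M - B).
  move=> B hB; rewrite -frob_le hE; have := ge_inf (hlb beta q M); apply; by exists B.
have hkey : forall B, @Bset R beta s m n B ->
    exists B', @Bset R beta s m n B' /\ FR (N - B') <= FR (M - B).
  move=> B [ks [X' [Y' [[hX'r [hX'k hX's]] [[hY'r [hY'k hY's]] ->]]]]].
  have hW : (pb (pprod beta 1 s) * pd (pprod beta 1 s) =
             pb (pprod beta 1 q) * pd (pprod beta 1 q))%N.
    by rewrite !P_pbd //; lia.
  have hQD : pd (pprod beta s.+1 (size beta)) = pd (pprod beta q.+1 (size beta)).
    by rewrite !Q_pd.
  have hYnz : forall r j, Y r j != 0 -> in_supp (pprod beta q.+1 (size beta)) r j.
    by move=> r j; apply: contraR => h; rewrite hYs.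
  have hXnz : forall i r, X i r != 0 -> in_supp (pprod beta 1 q) i r.
    by move=> i r; apply: contraR => h; rewrite hXs.
  case: (leqP s q) => hsq.
    have := @core R m n kq ks (fun i r => in_supp (pprod beta 1 q) i r)
      (fun i t => in_supp (pprod beta 1 s) i t)
      (fun t j => in_supp (pprod beta s.+1 (size beta)) t j) M N X Y hXs hN _ _ _ X' Y' hX's hY's.
    case.
    - move=> X2 hX2; apply: hopt; exists kq, X2, Y; do !split => //.
    - move=> i i' t h h' r; apply: rowclass_eq hW _ h h'.
      rewrite !P_pd //.
      apply: d_chain => //; lia.
    - move=> r t j j' h h'; apply: colclass_imp hQD _ (hYnz _ _ h) (hYnz _ _ h').
      exact: Q_pc_dvd.
    move=> Y'' [hY'' hle]; exists (X' *m Y''); split => //.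
    by exists ks, X', Y''; do !split => //.
  have := @core_t R m n kq ks (fun r j => in_supp (pprod beta q.+1 (size beta)) r j)
    (fun i t => in_supp (pprod beta 1 s) i t)
    (fun t j => in_supp (pprod beta s.+1 (size beta)) t j) M N X Y hYs hN _ _ _ X' Y' hX's hY's.
  case.
  - move=> Y2 hY2; apply: hopt; exists kq, X, Y2; do !split => //.
  - move=> j j' t h h' r; apply: colclass_eq hQD _ h h'.
    apply: Q_pc_dvd => //; lia.
  - move=> r t i i' h h'; apply: rowclass_imp hW _ (hXnz _ _ h) (hXnz _ _ h').
    rewrite !P_pd //.
    apply: d_chain => //; lia.
  move=> X'' [hX'' hle]; exists (X'' *m Y'); split => //.
  by exists ks, X'', Y'; do !split => //.
rewrite /Ebeta.
case: (pselect ([set frob (M - B) | B in @Bset R beta s m n] !=set0)) => [ne|e].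
  apply: (lb_le_inf ne) => y [B hB <-].
  have [B' [hB' hle]] := hkey B hB.
  have h1 : inf [set frob (N - B0) | B0 in @Bset R beta s m n] <= frob (N - B').
    by have := ge_inf (hlb beta s N); apply; exists B'.
  by apply: (le_trans h1); rewrite frob_le.
have e1 : [set frob (M - B) | B in @Bset R beta s m n] = set0.
  by apply/seteqP; split => // y [B hB <-]; apply: e; exists (frob (M - B)), B.
have e2 : [set frob (N - B) | B in @Bset R beta s m n] = set0.
  by apply/seteqP; split => // y [B hB <-]; apply: e; exists (frob (M - B)), B.
by rewrite e1 e2.
Qed.
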